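(* Let $S$ be a symmetric numerical semigroup. Then $\#I(S)=\#T(S)$.
   Context: A numerical semigroup is a subset $S\subseteq\mathbb{N}$ (nonnegative integers) containing $0$, closed under addition, with $\mathbb{N}\setminus S$ finite. $F(S)$ is the Frobenius number, the largest integer not in $S$. $S$ is symmetric if $F(S)-x\in S$ for all $x\in\mathbb{Z}\setminus S$. An isolated gap of $S$ is an element $x\in\mathbb{N}\setminus S$ with $x-1,x+1\in S$; $I(S)$ is the set of isolated gaps. $N(S)=\{s\in S: s<F(S)\}$ and $T(S)=\{s\in N(S): s-1\notin S \text{ and } s+1\notin S\}$. *)

(* Defs.v *)
From mathcomp Require Import all_boot all_order all_algebra.
Set Implicit Arguments. Unset Strict Implicit. Unset Printing Implicit Defensive.
Import Order.TTheory GRing.Theory Num.Theory.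

Definition numerical_semigroup (S : pred nat) : Prop :=
  [/\ S 0%N, (forall a b, S a -> S b -> S (a + b)%N)
    & exists N : nat, forall n, (N <= n)%N -> S n].

Definition inZ (S : pred nat) (x : int) : bool :=
  match x with Posz n => S n | Negz _ => false end.

(* F is the Frobenius number of S: the largest integer not in S
   (F = -1 when S = N, the standard convention). *)
Definition is_frobenius (S : pred nat) (F : int) : Prop :=
  ~~ inZ S F /\ (forall x : int, (F < x)%R -> inZ S x).

Definition symmetric_ns (S : pred nat) (F : int) : Prop :=
  forall x : int, ~~ inZ S x -> inZ S (F - x)%R.

Definition isolated_gap (S : pred nat) (x : nat) : bool :=
  [&& ~~ S x, inZ S (x%:Z - 1)%R & S x.+1].

Definition in_T (S : pred nat) (F : int) (s : nat) : bool :=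
  [&& S s, (s%:Z < F)%R, ~~ inZ S (s%:Z - 1)%R & ~~ S s.+1].

(* Main.v *)
Require Import Defs.
From mathcomp Require Import all_boot all_order all_algebra.
From mathcomp Require Import zify.
Import Order.TTheory GRing.Theory Num.Theory.

Lemma count_le_bij (P Q : pred nat) (N : nat) (f : nat -> nat) :
  (forall x, P x -> Q (f x)) -> (forall y, Q y -> y < N) ->
  (forall x1 x2, P x1 -> P x2 -> f x1 = f x2 -> x1 = x2) ->
  count P (iota 0 N) <= count Q (iota 0 N).
Proof.
move=> PQ QN inj.
rewrite -!size_filter -(size_map f).
apply: uniq_leq_size.
  rewrite map_inj_in_uniq ?filter_uniq ?iota_uniq //.
  by move=> x1 x2; rewrite !mem_filter => /andP[? _] /andP[? _]; apply: inj.
move=> y /mapP[x]; rewrite mem_filter => /andP[Px _] ->.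
by rewrite mem_filter PQ //= mem_iota /= add0n QN ?PQ.
Qed.

Lemma inZm1 S (x : nat) : inZ S (x%:Z - 1)%R = (0 < x) && S x.-1.
Proof.
case: x => [|x] //.
have e : (x.+1%:Z - 1 = x%:Z)%R by rewrite -addn1 PoszD addrK.
by rewrite e.
Qed.

Theorem proposition3p1 (S : pred nat) (F : int) (N : nat) :
  numerical_semigroup S -> is_frobenius S F -> symmetric_ns S F ->
  (forall n, (N <= n)%N -> S n) ->
  count (isolated_gap S) (iota 0 N) = count (in_T S F) (iota 0 N).
Proof.
move=> [S0 Sadd _] [nSF Fbig] Hsym HN.
case: F nSF Fbig Hsym => [f|k] nSF Fbig Hsym; last first.
  have h1 : isolated_gap S =1 pred0.
    move=> x; have Sx : S x by apply: (Fbig (Posz x)).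
    by rewrite /isolated_gap Sx.
  have h2 : in_T S (Negz k) =1 pred0.
    by move=> x; rewrite /in_T /= andbF.
  by rewrite (eq_count h1) (eq_count h2) !count_pred0.
have big : forall x, f < x -> S x.
  by move=> x hx; apply: (Fbig (Posz x)); rewrite ltz_nat.
have sym : forall x, ~~ S x -> x <= f /\ S (f - x).
  move=> x nx.
  have xf : x <= f by rewrite leqNgt; apply/negP => /big h; move: nx; rewrite h.
  split=> //; have := Hsym (Posz x) nx.
  by rewrite subzn.
have anti : forall x, S x -> x <= f -> ~~ S (f - x).
  move=> x Sx xf; apply/negP => Sfx.
  by move: (Sadd _ _ Sx Sfx); rewrite subnKC // => h; move: nSF; rewrite /= h.
have nSf : ~~ S f by [].
have fN : f < N by rewrite ltnNge; apply/negP => /HN h; move: nSf; rewrite h.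
have gapE : forall x, isolated_gap S x = [&& ~~ S x, 0 < x, S x.-1 & S x.+1].
  by move=> x; rewrite /isolated_gap inZm1 -andbA.
have TE : forall s, in_T S (Posz f) s = [&& S s, s < f, ~~ ((0 < s) && S s.-1) & ~~ S s.+1].
  by move=> s; rewrite /in_T inZm1 ltz_nat.
have G2T : forall x, isolated_gap S x -> in_T S (Posz f) (f - x) /\ x <= f.
  move=> x; rewrite gapE => /and4P[nx x0 Sxm Sxp].
  have [xf Sfx] := sym x nx.
  split=> //; rewrite TE Sfx /=.
  apply/and3P; split.
  - by lia.
  - case: (ltnP 0 (f - x)) => h //=.
    have e : (f - x).-1 = f - x.+1 by lia.
    by rewrite e; apply: anti => //; lia.
  - have e : (f - x).+1 = f - x.-1 by lia.
    by rewrite e; apply: anti => //; lia.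
have T2G : forall s, in_T S (Posz f) s -> isolated_gap S (f - s) /\ s <= f.
  move=> s; rewrite TE => /and4P[Ss sf ns nsp].
  split; last by lia.
  rewrite gapE; apply/and4P; split.
  - by apply: anti => //; lia.
  - by lia.
  - have e : (f - s).-1 = f - s.+1 by lia.
    by rewrite e; case: (sym _ nsp).
  - case: (posnP s) => [-> | s0].
      by apply: big; lia.
    have e : (f - s).+1 = f - s.-1 by lia.
    rewrite e; apply: (sym _ _).2.
    by move: ns; rewrite s0.
apply/eqP; rewrite eqn_leq; apply/andP; split.
- apply: (@count_le_bij _ _ _ (fun x => f - x)).
  + by move=> x /G2T [].
  + move=> y; rewrite TE => /and4P[_ yf _ _]; lia.
  + move=> x1 x2 /G2T [_ h1] /G2T [_ h2]; lia.
- apply: (@count_le_bij _ _ _ (fun x => f - x)).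
  + by move=> x /T2G [].
  + move=> y; rewrite gapE => /and4P[ny _ _ _].
    by rewrite ltnNge; apply/negP => /HN h; move: ny; rewrite h.
  + move=> x1 x2 /T2G [_ h1] /T2G [_ h2]; lia.
Qed.
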